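(* Let $\alpha\in(1/2,1)$, $\beta\in(0,1)$, $c\in\mathbb{R}$, and define $\varphi(x)=|x|^{-\beta}$ for $x<-1$ and $\varphi(x)=1$ for $x\ge -1$. Then, as $x\to-\infty$, $$(-\partial_{xx})^\alpha\varphi(x)+c\,\varphi'(x)=-\frac{c_\alpha}{2\alpha\,|x|^{2\alpha}}+\frac{c\,\beta}{|x|^{\beta+1}}+O\!\left(\frac{1}{|x|^{\beta+2\alpha}}\right).$$
   Context: $(-\partial_{xx})^\alpha u(x)=c_\alpha\,\mathrm{PV}\!\int_{\mathbb{R}}\frac{u(x)-u(z)}{|x-z|^{1+2\alpha}}\,dz$, where $c_\alpha>0$ is the normalizing constant of the fractional Laplacian (Fourier symbol $|\xi|^{2\alpha}$) and PV is the Cauchy principal value. *)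

(* Defs.v *)
From Stdlib Require Import Reals Lra.
Open Scope R_scope.

Definition is_RInt (f : R -> R) (a b I : R) : Prop :=
  exists pr : Riemann_integrable f a b, RiemannInt pr = I.

Definition is_Gamma (s G : R) : Prop :=
  forall e, 0 < e -> exists delta T, 0 < delta /\
    forall a b, 0 < a < delta -> T < b ->
      exists I, is_RInt (fun t => Rpower t (s - 1) * exp (- t)) a b I /\
                Rabs (I - G) < e.

(* Normalizing constant of the fractional Laplacian (symbol |xi|^(2 alpha)) in 1D:
   c_alpha = 4^alpha Gamma(1/2+alpha) / (sqrt(pi) |Gamma(-alpha)|),
   using |Gamma(-alpha)| = Gamma(1-alpha)/alpha for alpha in (0,1). *)
Definition is_c_alpha (alpha C : R) : Prop :=
  exists G1 G2, is_Gamma (1/2 + alpha) G1 /\ is_Gamma (1 - alpha) G2 /\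
    C = Rpower 4 alpha * G1 * alpha / (sqrt PI * G2).

Definition is_frac_lap (alpha C : R) (u : R -> R) (x L : R) : Prop :=
  let k := fun z => (u x - u z) / Rpower (Rabs (x - z)) (1 + 2 * alpha) in
  forall e, 0 < e -> exists delta R0, 0 < delta /\
    forall eps Rr, 0 < eps < delta -> R0 < Rr -> eps < Rr ->
      exists I1 I2, is_RInt k (x - Rr) (x - eps) I1 /\
                    is_RInt k (x + eps) (x + Rr) I2 /\
                    Rabs (C * (I1 + I2) - L) < e.

Definition phi (beta : R) (x : R) : R :=
  if Rlt_dec x (-1) then Rpower (Rabs x) (- beta) else 1.

(* Main.v *)
Require Import Defs.
From Stdlib Require Import Reals Lra Lia ZArith FunctionalExtensionality.
From Coquelicot Require Import Coquelicot.
Open Scope R_scope.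

Lemma rp_pos a q : 0 < Rpower a q.
Proof. unfold Rpower; apply exp_pos. Qed.

Lemma exp_le_mono a b : a <= b -> exp a <= exp b.
Proof. intros [H|H]; [left; now apply exp_increasing | right; now subst]. Qed.

Lemma rp_le_base_neg a b q : 0 < a <= b -> q <= 0 -> Rpower b q <= Rpower a q.
Proof.
  intros [Ha Hab] Hq; unfold Rpower; apply exp_le_mono.
  assert (ln a <= ln b) by (apply ln_le; lra). nra.
Qed.

Lemma rp_le_base_pos a b q : 0 < a <= b -> 0 <= q -> Rpower a q <= Rpower b q.
Proof.
  intros [Ha Hab] Hq; unfold Rpower; apply exp_le_mono.
  assert (ln a <= ln b) by (apply ln_le; lra). nra.
Qed.

Lemma rp_le_exp b q1 q2 : 1 <= b -> q1 <= q2 -> Rpower b q1 <= Rpower b q2.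
Proof. intros; now apply Rle_Rpower. Qed.

Lemma rp_one q : Rpower 1 q = 1.
Proof. unfold Rpower; rewrite ln_1, Rmult_0_r; apply exp_0. Qed.

Lemma rp_mul a b q : 0 < a -> 0 < b -> Rpower (a*b) q = Rpower a q * Rpower b q.
Proof. intros; now rewrite Rpower_mult_distr. Qed.

Lemma rp_plus a q1 q2 : Rpower a (q1 + q2) = Rpower a q1 * Rpower a q2.
Proof. apply Rpower_plus. Qed.

Lemma rp_opp a q : Rpower a (-q) = / Rpower a q.
Proof. apply Rpower_Ropp. Qed.

Lemma cont_rp_comp f z q : continuity_pt f z -> 0 < f z ->
  continuity_pt (fun z => Rpower (f z) q) z.
Proof.
  intros Hf Hp. unfold Rpower.
  apply (continuity_pt_comp (fun z => q * ln (f z)) exp).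
  - apply continuity_pt_mult; [apply continuity_pt_const; intros ?; reflexivity|].
    apply (continuity_pt_comp f ln); auto.
    apply derivable_continuous_pt. exists (/ f z). now apply derivable_pt_lim_ln.
  - apply derivable_continuous_pt, derivable_pt_exp.
Qed.

Lemma is_derive_rp y q : 0 < y -> is_derive (fun t => Rpower t q) y (q * Rpower y (q-1)).
Proof. intros; apply is_derive_Reals; now apply derivable_pt_lim_power. Qed.

Section Phi.
Variable beta : R.
Hypothesis hb : 0 < beta < 1.

Lemma phi_alt z : phi beta z = Rpower ((1 - z + Rabs (1+z))/2) (-beta).
Proof.
  unfold phi. destruct (Rlt_dec z (-1)).
  - f_equal. rewrite !Rabs_left by lra. lra.
  - rewrite Rabs_right by lra. replace ((1 - z + (1+z))/2) with 1 by lra. now rewrite rp_one.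
Qed.

Lemma phi_lt z : z < -1 -> phi beta z = Rpower (-z) (-beta).
Proof. intros; unfold phi; destruct (Rlt_dec z (-1)); [|lra]. now rewrite Rabs_left by lra. Qed.

Lemma phi_ge z : -1 <= z -> phi beta z = 1.
Proof. intros; unfold phi; destruct (Rlt_dec z (-1)); lra. Qed.

Lemma phi_le z : z <= -1 -> phi beta z <= Rpower (-z) (-beta).
Proof. intros [H|H]. rewrite phi_lt; lra. subst. rewrite phi_ge by lra.
  replace (- -1) with 1 by lra. rewrite rp_one; lra. Qed.

Lemma phi_pos z : 0 < phi beta z.
Proof. rewrite phi_alt; apply rp_pos. Qed.

Lemma phi_le1 z : phi beta z <= 1.
Proof. rewrite phi_alt. apply Rle_trans with (Rpower 1 (-beta)); [|right; apply rp_one]. apply rp_le_base_neg; [|lra].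
  split; [lra|]. pose proof (Rle_abs (1+z)); lra. Qed.

Lemma phi_cont z : continuity_pt (phi beta) z.
Proof.
  replace (phi beta) with (fun z => Rpower ((1 - z + Rabs (1+z))/2) (-beta))
    by (apply functional_extensionality; intros; now rewrite phi_alt).
  apply cont_rp_comp.
  - unfold Rdiv. apply continuity_pt_mult; [|apply continuity_pt_const; intros ?; reflexivity].
    apply continuity_pt_plus. apply continuity_pt_minus. apply continuity_pt_const; intros ?; reflexivity.
    apply continuity_pt_id.
    apply (continuity_pt_comp (fun z => 1 + z) Rabs).
    apply continuity_pt_plus. apply continuity_pt_const; intros ?; reflexivity. apply continuity_pt_id.
    apply continuity_pt_filterlim, continuous_Rabs.
  - pose proof (Rle_abs (1+z)); lra.
Qed.
End Phi.

Lemma le_eps a b : (forall eta, 0 < eta -> a <= b + eta) -> a <= b.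
Proof.
  intros H. destruct (Rle_dec a b) as [|n]; auto.
  specialize (H ((a-b)/2)). lra.
Qed.

Lemma nat_unb M : exists N : nat, M < INR N.
Proof.
  destruct (archimed (Rabs M)) as [Ha _].
  pose proof (Rle_abs M).
  assert (Hz : (0 <= up (Rabs M))%Z) by (apply le_IZR; pose proof (Rabs_pos M); lra).
  exists (Z.to_nat (up (Rabs M))). rewrite INR_IZR_INZ, Z2Nat.id by exact Hz. lra.
Qed.

Lemma seq_to0 (w : R -> R) e0 :
  0 < e0 ->
  (forall eta, 0 < eta -> exists d, 0 < d /\ forall e, 0 < e < d -> w e < eta) ->
  forall eta, 0 < eta -> exists N : nat, forall n, (n >= N)%nat -> w (e0 / (INR n + 2)) < eta.
Proof.
  intros He0 Hw eta Heta. destruct (Hw eta Heta) as [d [Hd Hd']].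
  destruct (nat_unb (e0 / d)) as [N Ha].
  exists N. intros n Hn. apply Hd'.
  assert (HN' : INR N <= INR n) by (apply le_INR; lia).
  pose proof (pos_INR n).
  split. apply Rdiv_lt_0_compat; lra.
  apply Rmult_lt_reg_r with (INR n + 2); [lra|].
  unfold Rdiv; rewrite Rmult_assoc, Rinv_l, Rmult_1_r by lra.
  assert (e0 = (e0/d)*d) by (field; lra). nra.
Qed.

Lemma seq_toinf (v : R -> R) R0 :
  (forall eta, 0 < eta -> exists M, forall r, M < r -> v r < eta) ->
  forall eta, 0 < eta -> exists N : nat, forall n, (n >= N)%nat -> v (R0 + INR n + 1) < eta.
Proof.
  intros Hv eta Heta. destruct (Hv eta Heta) as [M HM].
  destruct (nat_unb (Rabs M + Rabs R0)) as [N Ha].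
  exists N. intros n Hn. apply HM.
  assert (HN' : INR N <= INR n) by (apply le_INR; lia).
  pose proof (Rle_abs M); pose proof (Rle_abs (-R0)); rewrite Rabs_Ropp in *. lra.
Qed.

Lemma pv_limit (F : R -> R -> R) (w v : R -> R) (e0 R0 : R) :
  0 < e0 ->
  (forall eta, 0 < eta -> exists d, 0 < d /\ forall e, 0 < e < d -> w e < eta) ->
  (forall eta, 0 < eta -> exists M, forall r, M < r -> v r < eta) ->
  (forall e e' r r', 0 < e < e0 -> 0 < e' < e0 -> R0 < r -> R0 < r' ->
      Rabs (F e r - F e' r') <= w e + w e' + v r + v r') ->
  exists L, forall e r, 0 < e < e0 -> R0 < r -> Rabs (F e r - L) <= w e + v r.
Proof.
  intros He0 Hw Hv HF.
  set (en := fun n : nat => e0 / (INR n + 2)).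
  set (rn := fun n : nat => R0 + INR n + 1).
  assert (Hen : forall n, 0 < en n < e0).
  { intros n; unfold en; pose proof (pos_INR n); split.
    apply Rdiv_lt_0_compat; lra.
    apply Rmult_lt_reg_r with (INR n + 2); [lra|].
    unfold Rdiv; rewrite Rmult_assoc, Rinv_l, Rmult_1_r by lra. nra. }
  assert (Hrn : forall n, R0 < rn n) by (intros n; unfold rn; pose proof (pos_INR n); lra).
  set (u := fun n => F (en n) (rn n)).
  assert (Hcv : forall eta, 0 < eta -> exists N : nat, forall n, (n >= N)%nat -> w (en n) + v (rn n) < eta).
  { intros eta Heta.
    destruct (seq_to0 w e0 He0 Hw (eta/2)) as [N1 H1]; [lra|].
    destruct (seq_toinf v R0 Hv (eta/2)) as [N2 H2]; [lra|].
    exists (max N1 N2). intros n Hn.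
    specialize (H1 n ltac:(lia)); specialize (H2 n ltac:(lia)). unfold en, rn; lra. }
  assert (HC : Cauchy_crit u).
  { intros eta Heta. destruct (Hcv (eta/2)) as [N HN]; [lra|].
    exists N. intros n m Hn Hm. unfold R_dist, u.
    eapply Rle_lt_trans; [apply HF; auto|].
    pose proof (HN n Hn); pose proof (HN m Hm). lra. }
  destruct (Rcomplete.R_complete u HC) as [L HL].
  exists L. intros e r He Hr. apply le_eps. intros eta Heta.
  destruct (Hcv (eta/2)) as [N1 HN1]; [lra|].
  destruct (HL (eta/2)) as [N2 HN2]; [lra|].
  set (n := max N1 N2).
  specialize (HN1 n ltac:(unfold n; lia)). specialize (HN2 n ltac:(unfold n; lia)).
  unfold R_dist in HN2.
  pose proof (HF e (en n) r (rn n) He (Hen n) Hr (Hrn n)).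
  fold (u n) in H.
  pose proof (Rabs_triang (F e r - u n) (u n - L)).
  replace (F e r - u n + (u n - L)) with (F e r - L) in H0 by ring.
  lra.
Qed.

Lemma rint_bound f h a b I : a <= b -> ex_RInt f a b -> is_RInt h a b I ->
  (forall t, a <= t <= b -> Rabs (f t) <= h t) -> Rabs (RInt f a b) <= I.
Proof.
  intros Hab Hf Hh Hb.
  assert (Hh' : ex_RInt h a b) by (eexists; eauto).
  assert (E : RInt h a b = I) by (now apply is_RInt_unique).
  assert (Hn : ex_RInt (fun t => - (h t)) a b) by (apply (ex_RInt_opp h a b Hh')).
  assert (E2 : RInt (fun t => - h t) a b = - RInt h a b) by (apply (RInt_opp h a b Hh')).
  assert (RInt f a b <= RInt h a b).
  { apply RInt_le; auto. intros t Ht. pose proof (Hb t ltac:(lra)). pose proof (Rle_abs (f t)). lra. }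
  assert (RInt (fun t => - (h t)) a b <= RInt f a b).
  { apply RInt_le; auto. intros t Ht. pose proof (Hb t ltac:(lra)). pose proof (Rle_abs (- f t)).
    rewrite Rabs_Ropp in *. lra. }
  rewrite E2 in H0.
  apply Rabs_le; lra.
Qed.

Lemma cont_rp t q : 0 < t -> continuous (fun t => Rpower t q) t.
Proof. intros; apply (ex_derive_continuous (K:=R_AbsRing) (V:=R_NormedModule) (fun t => Rpower t q)); eexists; now apply is_derive_rp. Qed.

Lemma int_pow a b q : 0 < a -> 0 < b -> q + 1 <> 0 ->
  is_RInt (fun t => Rpower t q) a b ((Rpower b (q+1) - Rpower a (q+1)) / (q+1)).
Proof.
  intros Ha Hb Hq.
  replace ((Rpower b (q+1) - Rpower a (q+1)) / (q+1))
    with (minus ((fun t => / (q+1) * Rpower t (q+1)) b) ((fun t => / (q+1) * Rpower t (q+1)) a))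
    by (unfold minus, plus, opp; simpl; field; auto).
  apply (is_RInt_derive (V:=R_CompleteNormedModule) (fun t => / (q+1) * Rpower t (q+1))).
  - intros t Ht. assert (0 < t) by (pose proof (Rmin_glb_lt a b 0); unfold Rmin in *; destruct Rle_dec; lra).
    eapply is_derive_ext; [intros; reflexivity|].
    replace (Rpower t q) with (/ (q+1) * ((q+1) * Rpower t (q+1-1))).
    + apply is_derive_scal, is_derive_rp; auto.
    + replace (q+1-1) with q by ring. field; auto.
  - intros t Ht. apply cont_rp. unfold Rmin in *; destruct Rle_dec; lra.
Qed.

Lemma int_shift s a b be : a <= b < s -> be <> 1 ->
  is_RInt (fun t => Rpower (s - t) (-be)) a b ((Rpower (s-a) (1-be) - Rpower (s-b) (1-be)) / (1-be)).
Proof.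
  intros Hab Hq.
  replace ((Rpower (s-a) (1-be) - Rpower (s-b) (1-be)) / (1-be))
    with (minus ((fun t => - / (1-be) * Rpower (s - t) (1-be)) b) ((fun t => - / (1-be) * Rpower (s-t) (1-be)) a))
    by (unfold minus, plus, opp; simpl; field; lra).
  apply (is_RInt_derive (V:=R_CompleteNormedModule) (fun t => - / (1-be) * Rpower (s - t) (1-be))).
  - intros t Ht. assert (0 < s - t) by (unfold Rmin, Rmax in *; destruct Rle_dec; lra).
    replace (Rpower (s - t) (-be)) with (- / (1-be) * (scal (-1) ((1-be) * Rpower (s-t) (1-be-1)))).
    + apply is_derive_scal.
      apply (is_derive_comp (fun u => Rpower u (1-be)) (fun t => s - t)).
      * now apply is_derive_rp.
      * auto_derive; [trivial|ring].
    + replace (1-be-1) with (-be) by ring. unfold scal; simpl; unfold mult; simpl. field; lra.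
  - intros t Ht. apply continuous_comp with (f := fun t => s - t) (g := fun u => Rpower u (-be)).
    + apply (ex_derive_continuous (K:=R_AbsRing) (V:=R_NormedModule) (fun t => s - t)).
      eexists. auto_derive; [trivial|reflexivity].
    + apply cont_rp. unfold Rmin, Rmax in *; destruct Rle_dec; lra.
Qed.

Section Main.
Variables alpha beta s : R.
Hypothesis ha : 1/2 < alpha < 1.
Hypothesis hb : 0 < beta < 1.
Hypothesis hs : 2 < s.

Definition Nm t := 2 * phi beta (-s) - phi beta (-s - t) - phi beta (-s + t).
Definition g t := Nm t / Rpower t (1 + 2*alpha).

Lemma g_eq t : g t = Nm t * Rpower t (-(1+2*alpha)).
Proof. unfold g; rewrite rp_opp; reflexivity. Qed.

Lemma cont_pt_lin (a b : R) z : continuity_pt (fun t => phi beta (a + b * t)) z.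
Proof.
  apply (continuity_pt_comp (fun t => a + b * t) (phi beta)).
  - apply continuity_pt_plus; [apply continuity_pt_const; intros ?; reflexivity|].
    apply continuity_pt_mult; [apply continuity_pt_const; intros ?; reflexivity|apply continuity_pt_id].
  - apply phi_cont; auto.
Qed.

Lemma g_cont t : 0 < t -> continuous g t.
Proof.
  intros Ht. apply continuity_pt_filterlim. unfold g, Nm.
  apply continuity_pt_div.
  - apply continuity_pt_minus. apply continuity_pt_minus.
    apply continuity_pt_const; intros ?; reflexivity.
    eapply continuity_pt_ext; [|apply (cont_pt_lin (-s) (-1))]. intros; simpl; f_equal; ring.
    eapply continuity_pt_ext; [|apply (cont_pt_lin (-s) 1)]. intros; simpl; f_equal; ring.
  - apply continuity_pt_filterlim, cont_rp; auto.
  - pose proof (rp_pos t (1+2*alpha)); lra.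
Qed.

Lemma g_ex a b : 0 < a -> 0 < b -> ex_RInt g a b.
Proof.
  intros Ha Hb. apply (ex_RInt_continuous (V:=R_CompleteNormedModule)). intros z Hz. apply g_cont.
  unfold Rmin in Hz; destruct Rle_dec; lra.
Qed.

Lemma phi0 : phi beta (-s) = Rpower s (-beta).
Proof. rewrite phi_lt by lra. f_equal; ring. Qed.

Lemma Nm_abs t : Rabs (Nm t) <= 2.
Proof.
  unfold Nm. pose proof (phi_pos beta (-s)); pose proof (phi_pos beta (-s-t)); pose proof (phi_pos beta (-s+t)).
  pose proof (phi_le1 beta hb (-s)); pose proof (phi_le1 beta hb (-s-t)); pose proof (phi_le1 beta hb (-s+t)).
  apply Rabs_le; lra.
Qed.

Lemma Nm_part t : 0 <= t -> Rabs (2 * phi beta (-s) - phi beta (-s - t)) <= 2 * Rpower s (-beta).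
Proof.
  intros Ht. rewrite phi0. rewrite (phi_lt beta (-s-t)) by lra.
  assert (Rpower (- (-s-t)) (-beta) <= Rpower s (-beta)) by (apply rp_le_base_neg; lra).
  pose proof (rp_pos (- (-s-t)) (-beta)). pose proof (rp_pos s (-beta)).
  apply Rabs_le; lra.
Qed.

Lemma Nm_second t : 0 < t <= s/2 ->
  Rabs (Nm t) <= 2*beta*(beta+1)*Rpower (s/2) (-beta-2) * t^2.
Proof.
  intros Ht.
  set (psi := fun y => Rpower y (-beta)).
  assert (Nt : Nm t = 2 * psi s - psi (s+t) - psi (s-t)).
  { unfold Nm, psi. rewrite phi0, (phi_lt beta (-s-t)), (phi_lt beta (-s+t)) by lra.
    replace (- (-s-t)) with (s+t) by ring. replace (- (-s+t)) with (s-t) by ring. reflexivity. }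
  set (dpsi := fun y => -beta * Rpower y (-beta-1)).
  set (G := fun v => psi (s+v) + psi (s-v)).
  set (dG := fun v => dpsi (s+v) - dpsi (s-v)).
  assert (HG : forall v, -s < v < s -> is_derive G v (dG v)).
  { intros v Hv.
    assert (H1 : is_derive (fun v => psi (s+v)) v (scal 1 (dpsi (s+v)))).
    { apply (is_derive_comp psi (fun v => s+v)).
      - unfold psi, dpsi. apply is_derive_rp; lra.
      - auto_derive; [trivial|ring]. }
    assert (H2 : is_derive (fun v => psi (s-v)) v (scal (-1) (dpsi (s-v)))).
    { apply (is_derive_comp psi (fun v => s-v)).
      - unfold psi, dpsi. apply is_derive_rp; lra.
      - auto_derive; [trivial|ring]. }
    pose proof (is_derive_plus _ _ _ _ _ H1 H2) as H3.
    unfold G, dG. replace (dpsi (s + v) - dpsi (s - v)) with (plus (scal 1 (dpsi (s + v))) (scal (-1) (dpsi (s - v)))).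
    exact H3.
    unfold plus, scal; simpl; unfold mult; simpl; ring. }
  destruct (MVT_gen G 0 t dG) as [c [Hc Ec]].
  { intros v Hv. apply HG. unfold Rmin, Rmax in Hv; destruct Rle_dec; lra. }
  { intros v Hv. apply derivable_continuous_pt. exists (dG v). apply is_derive_Reals, HG.
    unfold Rmin, Rmax in Hv; destruct Rle_dec; lra. }
  rewrite Rmin_left, Rmax_right in Hc by lra.
  set (dH := fun y => -beta * ((-beta-1) * Rpower y (-beta-1-1))).
  assert (HH : forall y, 0 < y -> is_derive dpsi y (dH y)).
  { intros y Hy. unfold dpsi, dH. apply is_derive_scal, is_derive_rp; auto. }
  destruct (MVT_gen dpsi (s-c) (s+c) dH) as [d [Hd Ed]].
  { intros v Hv. apply HH. unfold Rmin, Rmax in Hv; destruct Rle_dec; lra. }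
  { intros v Hv. apply derivable_continuous_pt. exists (dH v). apply is_derive_Reals, HH.
    unfold Rmin, Rmax in Hv; destruct Rle_dec; lra. }
  rewrite Rmin_left, Rmax_right in Hd by lra.
  assert (EN : Nm t = - (dH d * (2*c)) * t).
  { rewrite Nt. unfold dG in Ec. rewrite Ed in Ec.
    replace (s + c - (s - c)) with (2*c) in Ec by ring.
    unfold G in Ec. replace (s+0) with s in Ec by ring. replace (s-0) with s in Ec by ring.
    replace (t-0) with t in Ec by ring. nra. }
  assert (EH : dH d = beta * (beta+1) * Rpower d (-beta-2)).
  { unfold dH. replace (-beta-1-1) with (-beta-2) by ring. ring. }
  assert (Hb2 : Rpower d (-beta-2) <= Rpower (s/2) (-beta-2)) by (apply rp_le_base_neg; lra).
  pose proof (rp_pos d (-beta-2)).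
  rewrite EN, EH.
  rewrite Rabs_left1.
  2:{ assert (0 <= beta * (beta+1) * Rpower d (-beta-2) * (2*c) * t) by
        (repeat apply Rmult_le_pos; lra). nra. }
  assert (0 <= beta*(beta+1)) by nra.
  assert (beta * (beta+1) * Rpower d (-beta-2) <= beta*(beta+1)*Rpower (s/2) (-beta-2)) by
    (apply Rmult_le_compat_l; lra).
  assert (0 <= beta * (beta+1) * Rpower d (-beta-2)) by (apply Rmult_le_pos; lra).
  assert (c*t <= t*t) by nra.
  nra.
Qed.

Lemma rp_sq t : 0 < t -> Rpower t 2 = t^2.
Proof. intros; rewrite <- Rpower_pow by auto. f_equal; try (simpl; ring). Qed.

Lemma is_RInt_scalR f a b k I : is_RInt f a b I -> is_RInt (fun t => k * f t) a b (k * I).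
Proof. intros H. apply (is_RInt_scal f a b k I H). Qed.

Lemma A_bound a b : 0 < a <= b -> b <= s/2 ->
  Rabs (RInt g a b) <= 2*beta*(beta+1)*Rpower (s/2) (-beta-2) / (2-2*alpha) * Rpower b (2-2*alpha).
Proof.
  intros Hab Hb. set (Ms := 2*beta*(beta+1)*Rpower (s/2) (-beta-2)).
  assert (HMs : 0 <= Ms) by (unfold Ms; pose proof (rp_pos (s/2) (-beta-2)); repeat apply Rmult_le_pos; lra).
  eapply Rle_trans.
  - apply (rint_bound g (fun t => Ms * Rpower t (1-2*alpha)) a b
      (Ms * ((Rpower b (1-2*alpha+1) - Rpower a (1-2*alpha+1)) / (1-2*alpha+1)))).
    + lra.
    + apply g_ex; lra.
    + apply is_RInt_scalR, int_pow; lra.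
    + intros t Ht. rewrite g_eq, Rabs_mult, (Rabs_right (Rpower t _)) by (left; apply rp_pos).
      apply Rle_trans with (Ms * t^2 * Rpower t (- (1+2*alpha))).
      * apply Rmult_le_compat_r; [left; apply rp_pos|]. apply Nm_second; lra.
      * right. rewrite Rmult_assoc. f_equal. rewrite <- rp_sq by lra. rewrite <- rp_plus. f_equal; ring.
  - replace (1-2*alpha+1) with (2-2*alpha) by ring.
    pose proof (rp_pos a (2-2*alpha)).
    unfold Rdiv. rewrite Rmult_assoc. apply Rmult_le_compat_l; auto.
    assert (0 < / (2-2*alpha)) by (apply Rinv_0_lt_compat; lra).
    rewrite Rmult_comm. apply Rmult_le_compat_l; lra.
Qed.

Lemma RInt_swapR f a b : ex_RInt f a b -> RInt f b a = - RInt f a b.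
Proof. intros H. symmetry. apply (opp_RInt_swap (V:=R_CompleteNormedModule) f a b H). Qed.

Lemma A_bound2 a b : 0 < a <= s/2 -> 0 < b <= s/2 ->
  Rabs (RInt g a b) <= 2*beta*(beta+1)*Rpower (s/2) (-beta-2) / (2-2*alpha) *
     (Rpower a (2-2*alpha) + Rpower b (2-2*alpha)).
Proof.
  intros Ha Hb. pose proof (rp_pos a (2-2*alpha)); pose proof (rp_pos b (2-2*alpha)).
  assert (0 <= 2*beta*(beta+1)*Rpower (s/2) (-beta-2) / (2-2*alpha)).
  { unfold Rdiv. pose proof (rp_pos (s/2) (-beta-2)). assert (0 < / (2-2*alpha)) by (apply Rinv_0_lt_compat; lra).
    repeat apply Rmult_le_pos; lra. }
  destruct (Rle_dec a b).
  - eapply Rle_trans; [apply A_bound; lra|]. nra.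
  - rewrite RInt_swapR by (apply g_ex; lra). rewrite Rabs_Ropp.
    eapply Rle_trans; [apply A_bound; lra|]. nra.
Qed.

Lemma tail_bound a b : 0 < a <= b ->
  Rabs (RInt g a b) <= Rpower a (-(2*alpha)) / alpha.
Proof.
  intros Hab.
  eapply Rle_trans.
  - apply (rint_bound g (fun t => 2 * Rpower t (-(1+2*alpha))) a b
      (2 * ((Rpower b (-(1+2*alpha)+1) - Rpower a (-(1+2*alpha)+1)) / (-(1+2*alpha)+1)))).
    + lra.
    + apply g_ex; lra.
    + apply is_RInt_scalR, int_pow; lra.
    + intros t Ht. rewrite g_eq, Rabs_mult, (Rabs_right (Rpower t _)) by (left; apply rp_pos).
      apply Rmult_le_compat_r; [left; apply rp_pos|]. apply Nm_abs.
  - replace (-(1+2*alpha)+1) with (-(2*alpha)) by ring.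
    pose proof (rp_pos b (-(2*alpha))). pose proof (rp_pos a (-(2*alpha))).
    apply Rle_trans with (2 * (Rpower a (- (2 * alpha)) / (2*alpha))); [|right; field; lra].
    apply Rmult_le_compat_l; [lra|].
    unfold Rdiv. replace (/ - (2*alpha)) with (- / (2*alpha)) by (field; lra).
    assert (0 < / (2*alpha)) by (apply Rinv_0_lt_compat; lra). nra.
Qed.

Lemma tail_bound2 a b : 0 < a -> 0 < b ->
  Rabs (RInt g a b) <= (Rpower a (-(2*alpha)) + Rpower b (-(2*alpha))) / alpha.
Proof.
  intros Ha Hb. pose proof (rp_pos a (-(2*alpha))); pose proof (rp_pos b (-(2*alpha))).
  assert (0 < / alpha) by (apply Rinv_0_lt_compat; lra). unfold Rdiv in *.
  destruct (Rle_dec a b).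
  - eapply Rle_trans; [apply tail_bound; lra|]. unfold Rdiv; nra.
  - rewrite RInt_swapR by (apply g_ex; lra). rewrite Rabs_Ropp.
    eapply Rle_trans; [apply tail_bound; lra|]. unfold Rdiv; nra.
Qed.

Lemma RInt_plusR f h a b : ex_RInt f a b -> ex_RInt h a b ->
  RInt (fun t => f t + h t) a b = RInt f a b + RInt h a b.
Proof. intros H1 H2. apply (RInt_plus (V:=R_CompleteNormedModule) f h a b H1 H2). Qed.

Lemma B3_bound Rr : s <= Rr ->
  Rabs (RInt g s Rr + (Rpower s (-(2*alpha)) - Rpower Rr (-(2*alpha))) / (2*alpha))
   <= Rpower s (-beta) * Rpower s (-(2*alpha)) / alpha.
Proof.
  intros HR.
  set (pw := fun t => Rpower t (-(1+2*alpha))).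
  assert (Ipw : is_RInt pw s Rr ((Rpower Rr (-(1+2*alpha)+1) - Rpower s (-(1+2*alpha)+1)) / (-(1+2*alpha)+1)))
    by (apply int_pow; lra).
  assert (Epw : RInt pw s Rr = (Rpower Rr (-(1+2*alpha)+1) - Rpower s (-(1+2*alpha)+1)) / (-(1+2*alpha)+1))
    by (now apply is_RInt_unique).
  replace (-(1+2*alpha)+1) with (-(2*alpha)) in Epw by ring.
  replace (RInt g s Rr + (Rpower s (-(2*alpha)) - Rpower Rr (-(2*alpha))) / (2*alpha))
    with (RInt (fun t => g t + pw t) s Rr).
  2:{ rewrite RInt_plusR; [|apply g_ex; lra| eexists; eauto]. rewrite Epw. match goal with |- ?a = ?b => change (@eq R a b) end. field; lra. }
  pose proof (rp_pos s (-beta)) as Hsb.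
  eapply Rle_trans.
  - apply (rint_bound (fun t => g t + pw t) (fun t => (2 * Rpower s (-beta)) * pw t) s Rr
      ((2 * Rpower s (-beta)) * ((Rpower Rr (-(1+2*alpha)+1) - Rpower s (-(1+2*alpha)+1)) / (-(1+2*alpha)+1)))).
    + lra.
    + apply (ex_RInt_plus (V:=R_CompleteNormedModule)); [apply g_ex; lra| eexists; eauto].
    + apply is_RInt_scalR; auto.
    + intros t Ht. rewrite g_eq. unfold pw.
      replace (Nm t * Rpower t (- (1 + 2 * alpha)) + Rpower t (- (1 + 2 * alpha)))
        with ((2 * phi beta (-s) - phi beta (-s - t)) * Rpower t (- (1 + 2 * alpha))).
      2:{ unfold Nm. rewrite (phi_ge beta (-s+t)) by lra. ring. }
      rewrite Rabs_mult, (Rabs_right (Rpower t _)) by (left; apply rp_pos).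
      apply Rmult_le_compat_r; [left; apply rp_pos|]. apply Nm_part; lra.
  - replace (-(1+2*alpha)+1) with (-(2*alpha)) by ring.
    pose proof (rp_pos Rr (-(2*alpha))). pose proof (rp_pos s (-(2*alpha))).
    apply Rle_trans with (2 * Rpower s (-beta) * (Rpower s (- (2 * alpha)) / (2*alpha))); [|right; field; lra].
    apply Rmult_le_compat_l; [lra|].
    unfold Rdiv. replace (/ - (2*alpha)) with (- / (2*alpha)) by (field; lra).
    assert (0 < / (2*alpha)) by (apply Rinv_0_lt_compat; lra). nra.
Qed.

Definition Qs := Rpower (s/2) (-(beta + 2*alpha)).

Lemma B1_bound : Rabs (RInt g (s/2) (s-1)) <= (2 + 1/(1-beta)) * Qs.
Proof.
  set (P := Rpower (s/2) (-(1+2*alpha))).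
  assert (HP : 0 < P) by apply rp_pos.
  pose proof (rp_pos s (-beta)) as Hsb.
  assert (Ish : is_RInt (fun t => Rpower (s - t) (-beta)) (s/2) (s-1)
     ((Rpower (s - s/2) (1-beta) - Rpower (s - (s-1)) (1-beta)) / (1-beta))) by (apply int_shift; lra).
  eapply Rle_trans.
  - apply (rint_bound g (fun t => 2 * Rpower s (-beta) * P + P * Rpower (s - t) (-beta)) (s/2) (s-1)
      ((s - 1 - s/2) * (2 * Rpower s (-beta) * P) +
       P * ((Rpower (s - s/2) (1-beta) - Rpower (s - (s-1)) (1-beta)) / (1-beta)))).
    + lra.
    + apply g_ex; lra.
    + apply (is_RInt_plus (V:=R_CompleteNormedModule)).
      * apply (is_RInt_const (V:=R_CompleteNormedModule)).
      * apply is_RInt_scalR; auto.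
    + intros t Ht. rewrite g_eq, Rabs_mult, (Rabs_right (Rpower t _)) by (left; apply rp_pos).
      assert (H1 : Rpower t (-(1+2*alpha)) <= P) by (apply rp_le_base_neg; lra).
      assert (H2 : Rabs (Nm t) <= 2 * Rpower s (-beta) + Rpower (s - t) (-beta)).
      { unfold Nm. pose proof (Nm_part t ltac:(lra)).
        pose proof (phi_pos beta (-s+t)). pose proof (phi_le beta (-s+t) ltac:(lra)).
        replace (- (-s+t)) with (s - t) in * by ring.
        pose proof (Rabs_triang (2 * phi beta (- s) - phi beta (- s - t)) (- phi beta (-s+t))).
        rewrite Rabs_Ropp, (Rabs_right (phi beta (-s+t))) in H3 by lra.
        replace (2 * phi beta (- s) - phi beta (- s - t) + - phi beta (- s + t))
          with (2 * phi beta (- s) - phi beta (- s - t) - phi beta (- s + t)) in H3 by ring.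
        eapply Rle_trans; [exact H3|]. lra. }
      pose proof (rp_pos (s-t) (-beta)).
      apply Rle_trans with ((2 * Rpower s (- beta) + Rpower (s - t) (- beta)) * P).
      * apply Rmult_le_compat; auto; [apply Rabs_pos| left; apply rp_pos].
      * right; ring.
  - replace (s - s/2) with (s/2) by field. replace (s - (s-1)) with 1 by ring. rewrite rp_one.
    assert (Hsb2 : Rpower s (-beta) <= Rpower (s/2) (-beta)) by (apply rp_le_base_neg; lra).
    assert (E1 : Rpower (s/2) (-beta) * P * (s/2) = Qs).
    { unfold P, Qs. rewrite <- (Rpower_1 (s/2)) at 3 by lra. rewrite <- !rp_plus. f_equal; ring. }
    assert (E2 : P * Rpower (s/2) (1-beta) = Qs).
    { unfold P, Qs. rewrite <- !rp_plus. f_equal; ring. }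
    assert (0 < 1 - beta) by lra.
    assert (0 < Rpower (s/2) (1-beta)) by apply rp_pos.
    assert (T1 : (s - 1 - s/2) * (2 * Rpower s (-beta) * P) <= 2 * Qs).
    { rewrite <- E1. assert (0 <= s - 1 - s/2) by lra.
      assert (X1 : 2 * Rpower s (-beta) * P <= 2 * Rpower (s/2) (-beta) * P) by nra.
      assert (X2 : 0 <= 2 * Rpower s (-beta) * P) by nra.
      apply Rle_trans with ((s/2) * (2 * Rpower s (-beta) * P)).
      apply Rmult_le_compat_r; lra.
      assert (0 < s/2) by lra. nra. }
    assert (T2 : P * ((Rpower (s/2) (1-beta) - 1) / (1-beta)) <= Qs / (1-beta)).
    { rewrite <- E2. unfold Rdiv. assert (0 < / (1-beta)) by (apply Rinv_0_lt_compat; lra). nra. }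
    unfold Rdiv in *. lra.
Qed.

Lemma P_le_Q : Rpower (s/2) (-(1+2*alpha)) <= Qs.
Proof. apply rp_le_exp; lra. Qed.

Lemma B2_bound : Rabs (RInt g (s-1) s) <= 2 * Qs.
Proof.
  eapply Rle_trans.
  - apply (abs_RInt_le_const g (s-1) s (2 * Rpower (s/2) (-(1+2*alpha)))).
    + lra.
    + apply g_ex; lra.
    + intros t Ht. rewrite g_eq, Rabs_mult, (Rabs_right (Rpower t _)) by (left; apply rp_pos).
      apply Rmult_le_compat; [apply Rabs_pos|left; apply rp_pos|apply Nm_abs|].
      apply rp_le_base_neg; lra.
  - pose proof P_le_Q. replace (s - (s-1)) with 1 by ring. lra.
Qed.

Lemma RInt_ChaslesR f a b c : ex_RInt f a b -> ex_RInt f b c -> RInt f a b + RInt f b c = RInt f a c.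
Proof. intros H1 H2. apply (RInt_Chasles (V:=R_CompleteNormedModule) f a b c H1 H2). Qed.

Definition K0 := 2*beta*(beta+1)/(2-2*alpha) + (2 + 1/(1-beta)) + 2 + 1/alpha.

Lemma F_bound e Rr : 0 < e <= s/2 -> s <= Rr ->
  Rabs (RInt g e Rr + Rpower s (-(2*alpha)) / (2*alpha)) <= K0 * Qs + Rpower Rr (-(2*alpha)) / (2*alpha).
Proof.
  intros He HR.
  assert (Esplit : RInt g e Rr = RInt g e (s/2) + RInt g (s/2) (s-1) + RInt g (s-1) s + RInt g s Rr).
  { rewrite !Rplus_assoc.
    rewrite (RInt_ChaslesR g (s-1) s Rr) by (apply g_ex; lra).
    rewrite (RInt_ChaslesR g (s/2) (s-1) Rr) by (apply g_ex; lra).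
    rewrite (RInt_ChaslesR g e (s/2) Rr) by (apply g_ex; lra). reflexivity. }
  pose proof (A_bound e (s/2) ltac:(lra) ltac:(lra)) as HA.
  pose proof B1_bound as HB1. pose proof B2_bound as HB2. pose proof (B3_bound Rr HR) as HB3.
  assert (EA : 2*beta*(beta+1)*Rpower (s/2) (-beta-2) / (2-2*alpha) * Rpower (s/2) (2-2*alpha)
     = 2*beta*(beta+1)/(2-2*alpha) * Qs).
  { unfold Qs. unfold Rdiv. replace (-(beta + 2*alpha)) with ((-beta-2) + (2-2*alpha)) by ring.
    rewrite rp_plus. field. lra. }
  rewrite EA in HA.
  assert (EB : Rpower s (-beta) * Rpower s (-(2*alpha)) / alpha <= Qs / alpha).
  { rewrite <- rp_plus. unfold Rdiv. apply Rmult_le_compat_r; [left; apply Rinv_0_lt_compat; lra|].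
    unfold Qs. replace (-beta + - (2*alpha)) with (-(beta+2*alpha)) by ring. apply rp_le_base_neg; lra. }
  pose proof (rp_pos Rr (-(2*alpha))).
  assert (0 < Rpower Rr (-(2*alpha)) / (2*alpha)) by (apply Rdiv_lt_0_compat; lra).
  rewrite Esplit.
  set (A := RInt g e (s/2)) in *. set (B1 := RInt g (s/2) (s-1)) in *. set (B2 := RInt g (s-1) s) in *.
  set (B3 := RInt g s Rr) in *.
  replace (A + B1 + B2 + B3 + Rpower s (- (2 * alpha)) / (2 * alpha))
    with (A + B1 + B2 + (B3 + (Rpower s (- (2 * alpha)) - Rpower Rr (- (2 * alpha))) / (2 * alpha))
          + Rpower Rr (- (2 * alpha)) / (2 * alpha)) by (field; lra).
  set (B3' := B3 + (Rpower s (- (2 * alpha)) - Rpower Rr (- (2 * alpha))) / (2 * alpha)) in *.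
  pose proof (Rabs_triang (A + B1 + B2 + B3') (Rpower Rr (- (2 * alpha)) / (2 * alpha))).
  pose proof (Rabs_triang (A + B1 + B2) B3').
  pose proof (Rabs_triang (A + B1) B2).
  pose proof (Rabs_triang A B1).
  rewrite (Rabs_right (Rpower Rr (- (2 * alpha)) / (2 * alpha))) in H1 by lra.
  unfold K0. unfold Rdiv in *. lra.
Qed.

End Main.

Lemma pow_to0 Cst gm : 0 <= Cst -> 0 < gm ->
  forall eta, 0 < eta -> exists d, 0 < d /\ forall e, 0 < e < d -> Cst * Rpower e gm < eta.
Proof.
  intros HC Hg eta Heta.
  set (a := eta / (Cst + 1)). assert (Ha : 0 < a) by (unfold a; apply Rdiv_lt_0_compat; lra).
  exists (Rpower a (/gm)). split; [apply rp_pos|].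
  intros e He.
  assert (Rpower e gm < Rpower (Rpower a (/gm)) gm) by (apply Rlt_Rpower_l; lra).
  replace (Rpower (Rpower a (/gm)) gm) with a in H.
  2:{ rewrite Rpower_mult. replace (/gm * gm) with 1 by (field; lra). rewrite Rpower_1; lra. }
  assert (Cst * a < eta).
  { assert (E : Cst * a = eta - a) by (unfold a; field; lra). lra. }
  pose proof (rp_pos e gm). nra.
Qed.

Lemma pow_toinf a : 0 < a ->
  forall eta, 0 < eta -> exists M, forall r, M < r -> Rpower r (-a) < eta.
Proof.
  intros Ha eta Heta.
  exists (Rpower eta (- / a)). intros r Hr.
  pose proof (rp_pos eta (- / a)).
  assert (Rpower (Rpower eta (- / a)) a < Rpower r a) by (apply Rlt_Rpower_l; lra).
  rewrite Rpower_mult in H0. replace (- / a * a) with (Ropp 1) in H0 by (field; lra).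
  rewrite rp_opp, Rpower_1 in H0 by lra.
  rewrite rp_opp. pose proof (rp_pos r a).
  apply Rmult_lt_reg_r with (Rpower r a); [lra|]. rewrite Rinv_l by lra.
  apply Rmult_lt_reg_l with (/eta). apply Rinv_0_lt_compat; lra.
  rewrite <- Rmult_assoc, Rinv_l, Rmult_1_l, Rmult_1_r by lra. lra.
Qed.

Section Link.
Variables alpha beta x : R.
Hypothesis ha : 1/2 < alpha < 1.
Hypothesis hb : 0 < beta < 1.

Definition kk z := (phi beta x - phi beta z) / Rpower (Rabs (x - z)) (1 + 2*alpha).

Lemma kk_cont z : z <> x -> continuity_pt kk z.
Proof.
  intros Hz. unfold kk. apply continuity_pt_div.
  - apply continuity_pt_minus; [apply continuity_pt_const; intros ?; reflexivity| apply phi_cont; auto].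
  - apply cont_rp_comp.
    + apply (continuity_pt_comp (fun z => x - z) Rabs).
      * apply continuity_pt_minus; [apply continuity_pt_const; intros ?; reflexivity| apply continuity_pt_id].
      * apply continuity_pt_filterlim, continuous_Rabs.
    + apply Rabs_pos_lt; lra.
  - pose proof (rp_pos (Rabs (x - z)) (1+2*alpha)); lra.
Qed.

Lemma kk_ex a b : (a < x /\ b < x) \/ (x < a /\ x < b) -> ex_RInt kk a b.
Proof.
  intros H. apply (ex_RInt_continuous (V:=R_CompleteNormedModule)). intros z Hz.
  apply continuity_pt_filterlim, kk_cont. unfold Rmin, Rmax in Hz; destruct Rle_dec; lra.
Qed.

Lemma to_defs a b : ex_RInt kk a b -> Defs.is_RInt kk a b (RInt kk a b).
Proof.
  intros H. exists (ex_RInt_Reals_0 kk a b H). symmetry. apply RInt_Reals.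
Qed.

End Link.

Lemma RInt_oppR f a b : ex_RInt f a b -> RInt (fun t => - f t) a b = - RInt f a b.
Proof. intros H. apply (RInt_opp (V:=R_CompleteNormedModule) f a b H). Qed.

Lemma comp_cont alpha beta x u t : 0 < beta < 1 -> u * t <> 0 ->
  continuous (fun t => kk alpha beta x (x + u * t)) t.
Proof.
  intros hb H. apply continuity_pt_filterlim.
  apply (continuity_pt_comp (fun t => x + u * t) (kk alpha beta x)).
  - apply continuity_pt_plus; [apply continuity_pt_const; intros ?; reflexivity|].
    apply continuity_pt_mult; [apply continuity_pt_const; intros ?; reflexivity|apply continuity_pt_id].
  - apply kk_cont; auto. lra.
Qed.

Lemma split_k alpha beta x eps Rr : 1/2 < alpha < 1 -> 0 < beta < 1 -> x < -2 -> 0 < eps < Rr ->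
  RInt (kk alpha beta x) (x - Rr) (x - eps) + RInt (kk alpha beta x) (x + eps) (x + Rr)
  = RInt (g alpha beta (-x)) eps Rr.
Proof.
  intros ha hb hx He.
  set (k := kk alpha beta x).
  set (F1 := fun t => k (x + -1 * t)).
  set (F2 := fun t => k (x + 1 * t)).
  assert (X1 : ex_RInt F1 eps Rr).
  { apply (ex_RInt_continuous (V:=R_CompleteNormedModule)). intros z Hz. apply comp_cont; auto.
    unfold Rmin, Rmax in Hz; destruct Rle_dec; lra. }
  assert (X2 : ex_RInt F2 eps Rr).
  { apply (ex_RInt_continuous (V:=R_CompleteNormedModule)). intros z Hz. apply comp_cont; auto.
    unfold Rmin, Rmax in Hz; destruct Rle_dec; lra. }
  assert (E1 : RInt k (x - Rr) (x - eps) = RInt F1 eps Rr).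
  { pose proof (RInt_comp_lin (V:=R_CompleteNormedModule) k (-1) x eps Rr) as H.
    replace (-1 * eps + x) with (x - eps) in H by ring.
    replace (-1 * Rr + x) with (x - Rr) in H by ring.
    specialize (H ltac:(apply kk_ex; auto; lra)).
    rewrite (RInt_swapR k (x - eps) (x - Rr)) by (apply kk_ex; auto; lra).
    rewrite <- H.
    rewrite (RInt_ext _ (fun t => - F1 t)).
    - rewrite RInt_oppR by auto. match goal with |- ?a = ?b => change (@eq R a b) end. ring.
    - intros t _. unfold F1, scal; simpl; unfold mult; simpl. replace (-1 * t + x) with (x + -1 * t) by ring. ring. }
  assert (E2 : RInt k (x + eps) (x + Rr) = RInt F2 eps Rr).
  { pose proof (RInt_comp_lin (V:=R_CompleteNormedModule) k 1 x eps Rr) as H.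
    replace (1 * eps + x) with (x + eps) in H by ring.
    replace (1 * Rr + x) with (x + Rr) in H by ring.
    specialize (H ltac:(apply kk_ex; auto; lra)).
    rewrite <- H. apply RInt_ext. intros t _. unfold F2, scal; simpl; unfold mult; simpl.
    rewrite Rmult_1_l. f_equal; ring. }
  rewrite E1, E2, <- RInt_plusR by auto.
  apply RInt_ext. intros t Ht. rewrite Rmin_left, Rmax_right in Ht by lra.
  unfold F1, F2, k, kk, g, Nm.
  replace (x - (x + -1 * t)) with t by ring. replace (x - (x + 1 * t)) with (-t) by ring.
  rewrite Rabs_Ropp, Rabs_right by lra.
  replace (- - x) with x by ring. replace (x + -1 * t) with (x - t) by ring. replace (x + 1*t) with (x + t) by ring.
  match goal with |- ?a = ?b => change (@eq R a b) end.
  field. pose proof (rp_pos t (1+2*alpha)); lra.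
Qed.

Lemma phi_deriv beta x : 0 < beta < 1 -> x < -2 ->
  derivable_pt_lim (phi beta) x (beta * Rpower (-x) (-beta-1)).
Proof.
  intros hb hx. apply is_derive_Reals.
  apply (is_derive_ext_loc (fun z => Rpower (-z) (-beta))).
  - exists (mkposreal 1 Rlt_0_1). intros z Hz. change (Rabs (z - x) < 1) in Hz.
    apply Rabs_def2 in Hz. simpl. rewrite phi_lt by lra. reflexivity.
  - replace (beta * Rpower (- x) (- beta - 1)) with (scal (-1) (-beta * Rpower (-x) (-beta-1))).
    + apply (is_derive_comp (fun u => Rpower u (-beta)) (fun z => -z)).
      * apply is_derive_rp; lra.
      * auto_derive; [trivial|ring].
    + unfold scal; simpl; unfold mult; simpl; ring.
Qed.

Lemma Qs_eq alpha beta s : 2 < s ->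
  Qs alpha beta s * Rpower s (beta + 2*alpha) = Rpower 2 (beta + 2*alpha).
Proof.
  intros hs. unfold Qs, Rpower. rewrite <- exp_plus. f_equal.
  unfold Rdiv. rewrite ln_mult by (try apply Rinv_0_lt_compat; lra).
  rewrite ln_Rinv by lra. ring.
Qed.

Theorem lemma2p2 (alpha beta c Calpha : R)
  (halpha : 1/2 < alpha < 1) (hbeta : 0 < beta < 1)
  (hC : is_c_alpha alpha Calpha) :
  exists K M : R, 0 < K /\
    forall x, x < - M ->
      exists L d, is_frac_lap alpha Calpha (phi beta) x L /\
        derivable_pt_lim (phi beta) x d /\
        Rabs (L + c * d
              - (- Calpha / (2 * alpha * Rpower (Rabs x) (2 * alpha))
                 + c * beta / Rpower (Rabs x) (beta + 1)))
        <= K / Rpower (Rabs x) (beta + 2 * alpha).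
Proof.
  clear hC.
  set (K0' := K0 alpha beta).
  assert (HK0 : 0 <= K0').
  { unfold K0', K0. assert (0 < 2*beta*(beta+1)/(2-2*alpha)) by (apply Rdiv_lt_0_compat; nra).
    assert (0 < 1/(1-beta)) by (apply Rdiv_lt_0_compat; lra).
    assert (0 < 1/alpha) by (apply Rdiv_lt_0_compat; lra). lra. }
  pose proof (rp_pos 2 (beta + 2*alpha)) as H2q.
  pose proof (Rabs_pos Calpha) as HCa.
  exists (Rabs Calpha * K0' * Rpower 2 (beta + 2*alpha) + 1), 2.
  split. { assert (0 <= Rabs Calpha * K0' * Rpower 2 (beta + 2*alpha)) by
             (repeat apply Rmult_le_pos; lra). lra. }
  intros x hx.
  assert (Ex : x = - (-x)) by ring.
  set (s := -x) in *. assert (hs : 2 < s) by (unfold s; lra).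
  set (Cst := 2*beta*(beta+1)*Rpower (s/2) (-beta-2) / (2-2*alpha)).
  assert (HCst : 0 <= Cst).
  { unfold Cst. pose proof (rp_pos (s/2) (-beta-2)). apply Rmult_le_pos.
    repeat apply Rmult_le_pos; lra. left; apply Rinv_0_lt_compat; lra. }
  set (w := fun e => Cst * Rpower e (2-2*alpha)).
  set (v := fun r => Rpower r (-(2*alpha)) / alpha).
  assert (Hw : forall eta, 0 < eta -> exists d, 0 < d /\ forall e, 0 < e < d -> w e < eta).
  { apply pow_to0; auto; lra. }
  assert (Hv : forall eta, 0 < eta -> exists M, forall r, M < r -> v r < eta).
  { intros eta Heta. destruct (pow_toinf (2*alpha) ltac:(lra) (eta*alpha) ltac:(nra)) as [M HM].
    exists M. intros r Hr. specialize (HM r Hr). unfold v.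
    apply Rmult_lt_reg_r with alpha; [lra|]. unfold Rdiv. rewrite Rmult_assoc, Rinv_l, Rmult_1_r by lra. lra. }
  assert (Hv0 : forall r, 0 < r -> 0 < v r) by (intros; unfold v; apply Rdiv_lt_0_compat; [apply rp_pos|lra]).
  assert (Hw0 : forall e, 0 <= w e) by (intros; unfold w; pose proof (rp_pos e (2-2*alpha)); nra).
  destruct (pv_limit (fun e r => RInt (g alpha beta s) e r) w v (s/2) s) as [L0 HL0].
  { lra. } { exact Hw. } { exact Hv. }
  { intros e e' r r' He He' Hr Hr'.
    assert (E : RInt (g alpha beta s) e r - RInt (g alpha beta s) e' r'
              = RInt (g alpha beta s) e e' + RInt (g alpha beta s) r' r).
    { rewrite <- (RInt_ChaslesR _ e e' r) by (apply g_ex; lra).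
      rewrite <- (RInt_ChaslesR _ e' r' r) by (apply g_ex; lra). ring. }
    rewrite E.
    pose proof (A_bound2 alpha beta s halpha hbeta hs e e' ltac:(lra) ltac:(lra)) as HA.
    pose proof (tail_bound2 alpha beta s halpha hbeta r' r ltac:(lra) ltac:(lra)) as HB.
    fold Cst in HA.
    pose proof (Rabs_triang (RInt (g alpha beta s) e e') (RInt (g alpha beta s) r' r)).
    unfold w, v. unfold Rdiv in *. lra. }
  exists (Calpha * L0), (beta * Rpower s (-beta-1)).
  split; [|split].
  -
    unfold is_frac_lap. cbv zeta. intros e He.
    set (eta := e / (2*(Rabs Calpha + 1))).
    assert (Heta : 0 < eta) by (unfold eta; apply Rdiv_lt_0_compat; lra).
    destruct (Hw eta Heta) as [d1 [Hd1 Hd1']]. destruct (Hv eta Heta) as [M1 HM1].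
    exists (Rmin d1 (s/2)), (Rmax M1 s). split.
    { apply Rmin_pos; lra. }
    intros eps Rr Heps HRr Hlt.
    assert (Hd1e : eps < d1) by (pose proof (Rmin_l d1 (s/2)); lra).
    assert (Hse : eps < s/2) by (pose proof (Rmin_r d1 (s/2)); lra).
    assert (HM1r : M1 < Rr) by (pose proof (Rmax_l M1 s); lra).
    assert (Hsr : s < Rr) by (pose proof (Rmax_r M1 s); lra).
    exists (RInt (kk alpha beta x) (x-Rr) (x-eps)), (RInt (kk alpha beta x) (x+eps) (x+Rr)).
    split; [|split].
    + apply to_defs. apply kk_ex; lra.
    + apply to_defs. apply kk_ex; lra.
    + rewrite split_k by lra. fold s.
      specialize (HL0 eps Rr ltac:(lra) ltac:(lra)). simpl in HL0.
      specialize (Hd1' eps ltac:(lra)). specialize (HM1 Rr HM1r).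
      replace (Calpha * RInt (g alpha beta s) eps Rr - Calpha * L0)
        with (Calpha * (RInt (g alpha beta s) eps Rr - L0)) by ring.
      rewrite Rabs_mult.
      apply Rle_lt_trans with (Rabs Calpha * (2 * eta)).
      * apply Rmult_le_compat_l; lra.
      * unfold eta. apply Rmult_lt_reg_r with (Rabs Calpha + 1); [lra|].
        replace (Rabs Calpha * (2 * (e / (2 * (Rabs Calpha + 1)))) * (Rabs Calpha + 1))
          with (Rabs Calpha * e) by (field; lra). nra.
  - unfold s. apply phi_deriv; auto; lra.
  - rewrite Ex. rewrite Rabs_Ropp, (Rabs_right s) by lra.
    assert (HB : Rabs (L0 + Rpower s (-(2*alpha)) / (2*alpha)) <= K0' * Qs alpha beta s).
    { apply le_eps. intros eta Heta.
      destruct (Hw (eta/3) ltac:(lra)) as [d [Hd Hd']]. destruct (Hv (eta/3) ltac:(lra)) as [M HM].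
      set (eps := Rmin d (s/2) / 2). set (Rr := Rmax M s + 1).
      assert (He1 : 0 < eps < d) by (unfold eps; pose proof (Rmin_l d (s/2)); assert (0 < Rmin d (s/2)) by (apply Rmin_pos; lra); lra).
      assert (He2 : eps < s/2) by (unfold eps; pose proof (Rmin_r d (s/2)); assert (0 < Rmin d (s/2)) by (apply Rmin_pos; lra); lra).
      assert (HR1 : M < Rr) by (unfold Rr; pose proof (Rmax_l M s); lra).
      assert (HR2 : s < Rr) by (unfold Rr; pose proof (Rmax_r M s); lra).
      pose proof (F_bound alpha beta s halpha hbeta hs eps Rr ltac:(lra) ltac:(lra)) as HF.
      specialize (HL0 eps Rr ltac:(lra) ltac:(lra)). simpl in HL0.
      specialize (Hd' eps He1). specialize (HM Rr HR1).
      fold K0' in HF.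
      assert (Ev : Rpower Rr (- (2 * alpha)) / (2 * alpha) = v Rr / 2) by (unfold v; field; lra).
      rewrite Ev in HF. pose proof (Hv0 Rr ltac:(lra)).
      pose proof (Rabs_triang (RInt (g alpha beta s) eps Rr + Rpower s (- (2 * alpha)) / (2 * alpha))
                              (-(RInt (g alpha beta s) eps Rr - L0))).
      rewrite Rabs_Ropp in H0.
      replace (RInt (g alpha beta s) eps Rr + Rpower s (- (2 * alpha)) / (2 * alpha) +
               - (RInt (g alpha beta s) eps Rr - L0)) with (L0 + Rpower s (- (2 * alpha)) / (2 * alpha)) in H0 by ring.
      lra. }
    assert (EE : Calpha * L0 + c * (beta * Rpower s (- beta - 1)) -
       (- Calpha / (2 * alpha * Rpower s (2 * alpha)) + c * beta / Rpower s (beta + 1))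
       = Calpha * (L0 + Rpower s (-(2*alpha)) / (2*alpha))).
    { replace (-beta-1) with (-(beta+1)) by ring. rewrite !rp_opp.
      pose proof (rp_pos s (2*alpha)). pose proof (rp_pos s (beta+1)). field. lra. }
    rewrite EE, Rabs_mult.
    pose proof (Qs_eq alpha beta s hs) as HQ.
    pose proof (rp_pos s (beta + 2*alpha)) as HS.
    assert (EQ : Qs alpha beta s = Rpower 2 (beta + 2*alpha) / Rpower s (beta + 2*alpha))
      by (rewrite <- HQ; field; lra).
    apply Rle_trans with (Rabs Calpha * (K0' * Qs alpha beta s)).
    + apply Rmult_le_compat_l; lra.
    + rewrite EQ. unfold Rdiv.
      assert (0 < / Rpower s (beta + 2 * alpha)) by (apply Rinv_0_lt_compat; lra). nra.
Qed.
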